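(* Let $G$ be a maximal outerplanar graph and $\widetilde{G}$ its reduced graph. In every $B_1$-EPG representation of $G$ (if there is any), the paths corresponding to the three vertices of any triangle in $\widetilde{G}$ form a claw clique.
   Context: A graph is maximal outerplanar if it is outerplanar and adding any single new edge yields a non-outerplanar graph. $S_3$ is the graph with vertices $x_1,x_2,x_3,y_1,y_2,y_3$ and edges $\{x_1,x_2\},\{x_1,x_3\},\{x_2,x_3\},\{x_1,y_1\},\{x_2,y_1\},\{x_2,y_2\},\{x_3,y_2\},\{x_3,y_3\},\{x_1,y_3\}$; its central vertices are $x_1,x_2,x_3$ and its central edges are the three edges among them. A copy of $S_3$ in $G$ is an induced subgraph isomorphic to $S_3$. The reduced graph $\widetilde{G}$ is obtained by coloring, for every copy of $S_3$ in $G$, its central vertices and central edges, and then deleting from $G$ all uncolored vertices and uncolored edges. An EPG representation of a graph is a set of paths on a rectangular grid (sequences of grid points joined consecutively by grid edges), one per vertex, such that two vertices are adjacent iff their paths share a grid edge; it is a $B_1$-EPG representation if every path has at most one bend (point where a horizontal and a vertical grid edge of the path meet). A claw in the grid is a grid point together with three of the grid edges incident to it; a claw clique is the set of all paths that use two of the three edges of some such claw. *)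

(* Defs.v *)
From mathcomp Require Import all_boot all_order all_algebra.
Set Implicit Arguments. Unset Strict Implicit. Unset Printing Implicit Defensive.

Definition simple_graph (T : finType) (e : rel T) : Prop :=
  symmetric e /\ irreflexive e.

Definition add_edge (T : finType) (e : rel T) (u v : T) : rel T :=
  fun x y => [|| e x y, (x == u) && (y == v) | (x == v) && (y == u)].

(* Outerplanar: vertices can be placed (injectively) in cyclic order on a circle
   so that no two edges, drawn as chords, cross; i.e. there are no edges ab, cd
   with pos a < pos c < pos b < pos d. *)
Definition outerplanar (T : finType) (e : rel T) : Prop :=
  exists pos : T -> nat, injective pos /\
    forall a b c d : T, e a b -> e c d ->
      ~~ [&& pos a < pos c, pos c < pos b & pos b < pos d].

Definition maximal_outerplanar (T : finType) (e : rel T) : Prop :=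
  outerplanar e /\
  forall u v : T, u != v -> ~~ e u v -> ~ outerplanar (add_edge e u v).

(* ---------- The graph S_3 on vertex set 'I_6 ----------
   0,1,2 = x_1,x_2,x_3 (central);  3,4,5 = y_1,y_2,y_3. *)
Definition S3_edges : seq (nat * nat) :=
  [:: (0,1); (0,2); (1,2); (0,3); (1,3); (1,4); (2,4); (2,5); (0,5)]%N.

Definition S3adj (i j : 'I_6) : bool :=
  ((nat_of_ord i, nat_of_ord j) \in S3_edges) ||
  ((nat_of_ord j, nat_of_ord i) \in S3_edges).

Definition S3_copy (T : finType) (e : rel T) (f : 'I_6 -> T) : Prop :=
  injective f /\ forall i j : 'I_6, e (f i) (f j) = S3adj i j.

Definition reduced_edge (T : finType) (e : rel T) (u v : T) : Prop :=
  exists (f : 'I_6 -> T) (i j : 'I_6),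
    S3_copy e f /\ [/\ (i < 3)%N, (j < 3)%N, i != j, f i = u & f j = v].

Definition reduced_vertex (T : finType) (e : rel T) (u : T) : Prop :=
  exists (f : 'I_6 -> T) (i : 'I_6), [/\ S3_copy e f, (i < 3)%N & f i = u].

Definition reduced_triangle (T : finType) (e : rel T) (u v w : T) : Prop :=
  [&& u != v, v != w & u != w] /\
  [/\ reduced_edge e u v, reduced_edge e v w & reduced_edge e u w].

Definition point := (int * int)%type.

Definition grid_adj (p q : point) : bool :=
  (absz (p.1 - q.1)%R + absz (p.2 - q.2)%R == 1)%N.

Definition grid_path (P : seq point) : bool :=
  [&& (1 < size P)%N, uniq P & all (fun pq => grid_adj pq.1 pq.2) (zip P (behead P))].

Definition uses_edge (P : seq point) (p q : point) : bool :=
  ((p, q) \in zip P (behead P)) || ((q, p) \in zip P (behead P)).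

Definition horizontal (p q : point) : bool := p.2 == q.2.

Definition bends (P : seq point) : nat :=
  count (fun t : point * (point * point) =>
           horizontal t.1 t.2.1 != horizontal t.2.1 t.2.2)
        (zip P (zip (behead P) (behead (behead P)))).

Definition B1_EPG_rep (T : finType) (e : rel T) (rep : T -> seq point) : Prop :=
  (forall v, grid_path (rep v) /\ (bends (rep v) <= 1)%N) /\
  (forall u v, u != v ->
     (e u v <-> exists p q : point, uses_edge (rep u) p q && uses_edge (rep v) p q)).

(* A claw: center c together with the three grid edges at c other than {c,m},
   where m is a grid neighbour of c. P uses two of the three edges of this claw. *)
Definition uses_two_claw_edges (c m : point) (P : seq point) : Prop :=
  exists q1 q2 : point,
    [&& q1 != q2, grid_adj c q1, grid_adj c q2, q1 != m, q2 != m,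
        uses_edge P c q1 & uses_edge P c q2].

Definition claw_clique3 (P1 P2 P3 : seq point) : Prop :=
  exists c m : point, grid_adj c m /\
    [/\ uses_two_claw_edges c m P1, uses_two_claw_edges c m P2 &
        uses_two_claw_edges c m P3].

(* Main.v *)
Require Import Defs.
From mathcomp Require Import all_boot all_order all_algebra.
From mathcomp Require Import zify.
Set Implicit Arguments. Unset Strict Implicit. Unset Printing Implicit Defensive.
Import Order.TTheory GRing.Theory Num.Theory.

Definition crossn (p : nat -> nat) (E : seq (nat * nat)) :=
  has (fun ab => has (fun cd => (p ab.1 < p cd.1) && (p cd.1 < p ab.2) && (p ab.2 < p cd.2)) E) E.
Definition symE (E : seq (nat * nat)) := E ++ map (fun ab => (ab.2, ab.1)) E.

Lemma count_le_split (p : nat -> nat) x s :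
  count (fun j => p j <= x) s = count (fun j => p j < x) s + count (fun j => p j == x) s.
Proof.
elim: s => //= j s ->.
by case: (ltngtP (p j) x) => h /=; rewrite ?add0n ?add1n ?addSn ?addnS.
Qed.

Lemma cross5 (p : nat -> nat) E :
  (forall i j, i < 5 -> j < 5 -> p i = p j -> i = j) ->
  all (fun ab => (ab.1 < 5) && (ab.2 < 5)) E ->
  all (fun s => crossn (nth 0 s) E) (permutations (iota 0 5)) -> crossn p E.
Proof.
move=> pinj Eb chk.
pose rank i := count (fun j => p j < p i) (iota 0 5).
have mono : forall a b, a < 5 -> b < 5 -> (p a < p b) = (rank a < rank b).
  move=> a b ha hb.
  case: (ltnP (p a) (p b)) => h.
    apply/esym; rewrite /rank.
    apply: (@leq_trans (count (fun j => p j <= p a) (iota 0 5))).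
      rewrite (count_le_split p (p a)) -[X in X < _]addn0 ltn_add2l -has_count.
      by apply/hasP; exists a; rewrite ?mem_iota //=.
    by apply: sub_count => j /= hj; apply: leq_ltn_trans h.
  apply/esym/negbTE; rewrite -leqNgt /rank.
  by apply: sub_count => j /= hj; apply: leq_trans h.
have rb : forall i, i < 5 -> rank i < 5.
  move=> i hi; rewrite /rank.
  have := count_predC (fun j => p j < p i) (iota 0 5); rewrite size_iota => e5.
  rewrite -[X in _ < X]e5 -[X in X < _]addn0 ltn_add2l -has_count.
  by apply/hasP; exists i; rewrite ?mem_iota //= ltnn.
have rinj : forall a b, a < 5 -> b < 5 -> rank a = rank b -> a = b.
  move=> a b ha hb hr; apply: pinj => //.
  case: (ltngtP (p a) (p b)) => // h.
    by move: h; rewrite mono // hr ltnn.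
  by move: h; rewrite mono // hr ltnn.
pose rs := map rank (iota 0 5).
have rs_nth : forall i, i < 5 -> nth 0 rs i = rank i.
  by move=> i hi; rewrite (nth_map 0) ?size_iota // nth_iota.
have urs : uniq rs.
  rewrite map_inj_in_uniq ?iota_uniq // => a b; rewrite !mem_iota /= !add0n.
  exact: rinj.
have srs : {subset rs <= iota 0 5}.
  by move=> x /mapP [i]; rewrite !mem_iota /= !add0n => hi ->; apply: rb.
have hsz : size (iota 0 5) <= size rs by rewrite size_map.
have [_ eqm] := uniq_min_size urs srs hsz.
have prs : rs \in permutations (iota 0 5).
  by rewrite mem_permutations; apply: uniq_perm => //; apply: iota_uniq.
have := allP chk rs prs; rewrite /crossn => H.
have eqh : {in E, (fun ab => has (fun cd => (nth 0 rs ab.1 < nth 0 rs cd.1) &&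
    (nth 0 rs cd.1 < nth 0 rs ab.2) && (nth 0 rs ab.2 < nth 0 rs cd.2)) E) =1
  (fun ab => has (fun cd => (p ab.1 < p cd.1) && (p cd.1 < p ab.2) && (p ab.2 < p cd.2)) E)}.
  move=> ab abE /=; apply: eq_in_has => cd cdE /=.
  move: (allP Eb ab abE) (allP Eb cd cdE) => /andP [a1 a2] /andP [c1 c2].
  by rewrite !rs_nth // -!mono.
by rewrite -(eq_in_has eqh).
Qed.

Lemma noK (T : finType) (e : rel T) (t : nat -> T) E : outerplanar e ->
  (forall i j, i < 5 -> j < 5 -> t i = t j -> i = j) ->
  all (fun ab => e (t ab.1) (t ab.2)) E ->
  all (fun ab => (ab.1 < 5) && (ab.2 < 5)) E ->
  all (fun s => crossn (nth 0 s) E) (permutations (iota 0 5)) -> False.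
Proof.
move=> [pos [pinj H]] tinj Ee Eb chk.
have pinj' : forall i j, i < 5 -> j < 5 -> pos (t i) = pos (t j) -> i = j.
  by move=> i j hi hj h; apply: tinj => //; apply: pinj.
have /hasP [ab abE] := cross5 (p := fun i => pos (t i)) pinj' Eb chk.
move=> /hasP [cd cdE] /andP [/andP [h1 h2] h3].
by move: (H _ _ _ _ (allP Ee ab abE) (allP Ee cd cdE)); rewrite h1 h2 h3.
Qed.

Definition F1l := symE [:: (0,1);(0,2);(0,3);(0,4);(1,2);(1,3);(1,4)].
Definition F2l := symE [:: (0,1);(1,2);(0,2);(3,0);(3,1);(4,1);(4,2);(3,4)].

Lemma F1chk : all (fun s => crossn (nth 0 s) F1l) (permutations (iota 0 5)).
Proof. by vm_compute. Qed.
Lemma F2chk : all (fun s => crossn (nth 0 s) F2l) (permutations (iota 0 5)).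
Proof. by vm_compute. Qed.

Lemma nth5_inj (T : eqType) (a0 a1 a2 a3 a4 : T) : uniq [:: a0; a1; a2; a3; a4] ->
  forall i j, i < 5 -> j < 5 -> nth a0 [:: a0; a1; a2; a3; a4] i = nth a0 [:: a0; a1; a2; a3; a4] j -> i = j.
Proof. by move=> U i j hi hj /eqP; rewrite nth_uniq // => /eqP. Qed.

Lemma F1 (T : finType) (e : rel T) : symmetric e -> outerplanar e ->
  forall a0 a1 a2 a3 a4 : T, uniq [:: a0; a1; a2; a3; a4] ->
  e a0 a1 -> e a0 a2 -> e a0 a3 -> e a0 a4 -> e a1 a2 -> e a1 a3 -> e a1 a4 -> False.
Proof.
move=> se op a0 a1 a2 a3 a4 U *.
have s' : forall x y, e x y -> e y x by move=> x y; rewrite se.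
apply: (noK (t := fun i => nth a0 [:: a0; a1; a2; a3; a4] i) (E := F1l) op (nth5_inj U)).
- by rewrite /=; repeat (apply/andP; split); by [ | apply: s'].
- by [].
- exact: F1chk.
Qed.

Lemma F2 (T : finType) (e : rel T) : symmetric e -> outerplanar e ->
  forall a0 a1 a2 a3 a4 : T, uniq [:: a0; a1; a2; a3; a4] ->
  e a0 a1 -> e a1 a2 -> e a0 a2 -> e a3 a0 -> e a3 a1 -> e a4 a1 -> e a4 a2 -> e a3 a4 -> False.
Proof.
move=> se op a0 a1 a2 a3 a4 U *.
have s' : forall x y, e x y -> e y x by move=> x y; rewrite se.
apply: (noK (t := fun i => nth a0 [:: a0; a1; a2; a3; a4] i) (E := F2l) op (nth5_inj U)).
- by rewrite /=; repeat (apply/andP; split); by [ | apply: s'].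
- by [].
- exact: F2chk.
Qed.

Lemma S3_pick (i j : 'I_6) : i < 3 -> j < 3 -> i != j ->
  exists k y : 'I_6, [/\ k != i, k != j, y != k, S3adj i j &
    [/\ S3adj i k, S3adj j k, S3adj y i, S3adj y j & ~~ S3adj y k && ~~ S3adj k y]].
Proof.
case: i => [[|[|[|i]]] hi] //; case: j => [[|[|[|j]]] hj] // _ _ ij.
- by exists (Ordinal (isT : 2 < 6)), (Ordinal (isT : 3 < 6)).
- by exists (Ordinal (isT : 1 < 6)), (Ordinal (isT : 5 < 6)).
- by exists (Ordinal (isT : 2 < 6)), (Ordinal (isT : 3 < 6)).
- by exists (Ordinal (isT : 0 < 6)), (Ordinal (isT : 4 < 6)).
- by exists (Ordinal (isT : 1 < 6)), (Ordinal (isT : 5 < 6)).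
- by exists (Ordinal (isT : 0 < 6)), (Ordinal (isT : 4 < 6)).
Qed.

Lemma redge_e (T : finType) (e : rel T) u v : reduced_edge e u v -> e u v.
Proof.
case=> f [i [j [[finj fadj] [i3 j3 ij fi fj]]]].
have [k [y [_ _ _ Sij _]]] := S3_pick i3 j3 ij.
by rewrite -fi -fj fadj.
Qed.

Lemma third (T : finType) (e : rel T) : symmetric e -> irreflexive e -> outerplanar e ->
  forall u v w, reduced_edge e u v -> e u w -> e v w -> u != w -> v != w ->
  exists z, [/\ e z u, e z v, ~~ e z w & z != w].
Proof.
move=> se ie op u v w [f [i [j [[finj fadj] [i3 j3 ij fi fj]]]]] euw evw uw vw.
have [k [y [ki kj yk Sij [Sik Sjk Syi Syj /andP [Syk Sky]]]]] := S3_pick i3 j3 ij.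
have ne : forall a b, e a b -> a != b.
  by move=> a b h; apply/eqP => ab; move: h; rewrite ab ie.
have fne : forall a b, a != b -> f a != f b by move=> a b; rewrite (inj_eq finj).
case: (eqVneq (f k) w) => [xw|xw].
  exists (f y); split.
  - by rewrite -fi fadj.
  - by rewrite -fj fadj.
  - by rewrite -xw fadj.
  - by rewrite -xw; apply: fne.
have yw : f y = w.
  case: (eqVneq (f y) w) => // yw; exfalso.
  apply: (F1 se op (a0 := u) (a1 := v) (a2 := w) (a3 := f k) (a4 := f y)).
  - have uv : u != v by rewrite -fi -fj; apply: fne.
    have ufk : u != f k by rewrite -fi (inj_eq finj) eq_sym.
    have vfk : v != f k by rewrite -fj (inj_eq finj) eq_sym.
    have ufy : u != f y by rewrite eq_sym; apply: ne; rewrite -fi fadj.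
    have vfy : v != f y by rewrite eq_sym; apply: ne; rewrite -fj fadj.
    have wfk : w != f k by rewrite eq_sym.
    have wfy : w != f y by rewrite eq_sym.
    have fkfy : f k != f y by rewrite (inj_eq finj) eq_sym.
    by rewrite /= !inE !negb_or uv uw ufk ufy vw vfk vfy wfk wfy fkfy.
  - by rewrite -fi -fj fadj.
  - by [].
  - by rewrite -fi fadj.
  - by rewrite se -fi fadj.
  - by [].
  - by rewrite -fj fadj.
  - by rewrite se -fj fadj.
exists (f k); split.
- by rewrite se -fi fadj.
- by rewrite se -fj fadj.
- by rewrite -yw fadj.
- by [].
Qed.

Lemma uniq5 (T : eqType) (a0 a1 a2 a3 a4 : T) :
  a0 != a1 -> a0 != a2 -> a0 != a3 -> a0 != a4 -> a1 != a2 -> a1 != a3 -> a1 != a4 ->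
  a2 != a3 -> a2 != a4 -> a3 != a4 -> uniq [:: a0; a1; a2; a3; a4].
Proof. by move=> *; rewrite /= !inE !negb_or; repeat (apply/andP; split). Qed.

Lemma graph_part (T : finType) (e : rel T) : simple_graph e -> maximal_outerplanar e ->
  forall u v w, reduced_triangle e u v w ->
  exists y1 y2 y3, [/\ (e u v /\ e v w /\ e u w /\ u != v /\ v != w /\ u != w),
     (e y1 u /\ e y1 v /\ ~~ e y1 w /\ y1 != w),
     (e y2 v /\ e y2 w /\ ~~ e y2 u /\ y2 != u),
     (e y3 u /\ e y3 w /\ ~~ e y3 v /\ y3 != v) &
     (~~ e y1 y2 /\ ~~ e y1 y3 /\ ~~ e y2 y3)].
Proof.
move=> [se ie] [op _] u v w [/and3P [uv vw uw] [ruv rvw ruw]].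
have euv := redge_e ruv; have evw := redge_e rvw; have euw := redge_e ruw.
have ne : forall a b, e a b -> a != b.
  by move=> a b h; apply/eqP => ab; move: h; rewrite ab ie.
have s' : forall x y, e x y -> e y x by move=> x y; rewrite se.
have [y1 [a1 b1 c1 d1]] := third se ie op ruv euw evw uw vw.
have vu : v != u by rewrite eq_sym.
have wu : w != u by rewrite eq_sym.
have wv : w != v by rewrite eq_sym.
have [y2 [a2 b2 c2 d2]] := third se ie op rvw (s' _ _ euv) (s' _ _ euw) vu wu.
have [y3 [a3 b3 c3 d3]] := third se ie op ruw euv (s' _ _ evw) uv wv.
have y12 : y1 != y2 by apply/eqP => h; move: c1; rewrite h b2.
have y13 : y1 != y3 by apply/eqP => h; move: c1; rewrite h b3.
have y23 : y2 != y3 by apply/eqP => h; move: c2; rewrite h a3.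
have uy1 : u != y1 by rewrite eq_sym; apply: ne.
have vy1 : v != y1 by rewrite eq_sym; apply: ne.
have wy1 : w != y1 by rewrite eq_sym.
have uy2 : u != y2 by rewrite eq_sym.
have vy2 : v != y2 by rewrite eq_sym; apply: ne.
have wy2 : w != y2 by rewrite eq_sym; apply: ne.
have uy3 : u != y3 by rewrite eq_sym; apply: ne.
have vy3 : v != y3 by rewrite eq_sym.
have wy3 : w != y3 by rewrite eq_sym; apply: ne.
exists y1, y2, y3; split => //.
split.
  apply/negP => h; apply: (F2 se op (a0 := u) (a1 := v) (a2 := w) (a3 := y1) (a4 := y2)) => //.
  exact: uniq5.
split; apply/negP => h.
  apply: (F2 se op (a0 := v) (a1 := u) (a2 := w) (a3 := y1) (a4 := y3)) => //.
  - exact: uniq5.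
  - exact: s'.
apply: (F2 se op (a0 := v) (a1 := w) (a2 := u) (a3 := y2) (a4 := y3)) => //.
- exact: uniq5.
- exact: s'.
- exact: s'.
Qed.

Local Open Scope ring_scope.

Record bp := BP { ph : int; pa : int; pb : int; pk : int; pc : int; pd : int }.
Definition okbp P := pa P < pb P -> pc P < pd P ->
  (pk P = pa P \/ pk P = pb P) /\ (ph P = pc P \/ ph P = pd P).
Definition memH P (x y : int) := y = ph P /\ pa P <= x < pb P.
Definition memV P (x y : int) := x = pk P /\ pc P <= y < pd P.
Definition mem P (o : bool) x y := if o then memH P x y else memV P x y.
Definition meets P Q := exists o x y, mem P o x y /\ mem Q o x y.

(* directions: 0 right 1 left 2 up 3 down ; two of the three edges other than m *)
Definition two P (cx cy : int) (m : nat) :=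
  let r := memH P cx cy in let l := memH P (cx - 1) cy in
  let u := memV P cx cy in let d := memV P cx (cy - 1) in
  match m with
  | 0%N => (l /\ u) \/ (l /\ d) \/ (u /\ d)
  | 1%N => (r /\ u) \/ (r /\ d) \/ (u /\ d)
  | 2%N => (r /\ l) \/ (r /\ d) \/ (l /\ d)
  | _ => (r /\ l) \/ (r /\ u) \/ (l /\ u)
  end.
Definition clawp P1 P2 P3 := exists cx cy m, two P1 cx cy m /\ two P2 cx cy m /\ two P3 cx cy m.
Definition common P1 P2 P3 := exists o x y, [/\ mem P1 o x y, mem P2 o x y & mem P3 o x y].

Lemma helly3 (a1 b1 a2 b2 a3 b3 : int) :
  a1 < b2 -> a2 < b1 -> a1 < b3 -> a3 < b1 -> a2 < b3 -> a3 < b2 ->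
  a1 < b1 -> a2 < b2 -> a3 < b3 ->
  exists x, [/\ a1 <= x < b1, a2 <= x < b2 & a3 <= x < b3].
Proof.
move=> *.
have [h|h] : (a2 <= a1 /\ a3 <= a1) \/ ~ (a2 <= a1 /\ a3 <= a1) by lia.
  by exists a1; split; lia.
have [h'|h'] : (a1 <= a2 /\ a3 <= a2) \/ ~ (a1 <= a2 /\ a3 <= a2) by lia.
  by exists a2; split; lia.
by exists a3; split; lia.
Qed.

Lemma G1core P1 P2 P3 x12 y12 x13 y13 :
  okbp P1 -> okbp P2 -> okbp P3 ->
  memH P1 x12 y12 -> memH P2 x12 y12 -> memH P1 x13 y13 -> memH P3 x13 y13 ->
  meets P2 P3 -> common P1 P2 P3 \/ clawp P1 P2 P3.
Proof.
rewrite /okbp /memH => o1 o2 o3 [h1 h1'] [h2 h2'] [h3 h3'] [h4 h4'] [[] [x [y []]]] /=.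
- rewrite /memH => -[h5 h5'] [h6 h6'].
  have [z [? ? ?]] := @helly3 (pa P1) (pb P1) (pa P2) (pb P2) (pa P3) (pb P3) ltac:(lia) ltac:(lia) ltac:(lia) ltac:(lia) ltac:(lia) ltac:(lia) ltac:(lia) ltac:(lia) ltac:(lia).
  left; exists true, z, (ph P1).
  rewrite /mem /memH; split; split; lia.
- rewrite /memV => -[h5 h5'] [h6 h6'].
  have [hov|hnov] : (pa P2 < pb P3 /\ pa P3 < pb P2) \/ ~ (pa P2 < pb P3 /\ pa P3 < pb P2) by lia.
  + have [z [? ? ?]] := @helly3 (pa P1) (pb P1) (pa P2) (pb P2) (pa P3) (pb P3) ltac:(lia) ltac:(lia) ltac:(lia) ltac:(lia) ltac:(lia) ltac:(lia) ltac:(lia) ltac:(lia) ltac:(lia).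
    left; exists true, z, (ph P1).
    rewrite /mem /memH; split; split; lia.
  + right.
    have [c2 c2'] := o2 ltac:(lia) ltac:(lia).
    have [c3 c3'] := o3 ltac:(lia) ltac:(lia).
    clear o1 o2 o3.
    exists (pk P2), (ph P1).
    have [up|dn] : pc P2 = ph P1 \/ pd P2 = ph P1 by lia.
    * exists 3%N; rewrite /two /memH /memV.
      have [l2|r2] : pk P2 = pb P2 \/ pk P2 = pa P2 by lia.
      - split; first by left; split; split; lia.
        split; first by right; right; split; split; lia.
        by right; left; split; split; lia.
      - split; first by left; split; split; lia.
        split; first by right; left; split; split; lia.
        by right; right; split; split; lia.
    * exists 2%N; rewrite /two /memH /memV.
      have [l2|r2] : pk P2 = pb P2 \/ pk P2 = pa P2 by lia.
      - split; first by left; split; split; lia.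
        split; first by right; right; split; split; lia.
        by right; left; split; split; lia.
      - split; first by left; split; split; lia.
        split; first by right; left; split; split; lia.
        by right; right; split; split; lia.
Qed.

Definition tr P := BP (pk P) (pc P) (pd P) (ph P) (pa P) (pb P).
Lemma mem_tr P o x y : mem (tr P) o x y <-> mem P (~~ o) y x.
Proof. by case: o. Qed.
Lemma okbp_tr P : okbp P -> okbp (tr P).
Proof. rewrite /okbp /= => h h1 h2; have [] := h h2 h1; tauto. Qed.
Lemma meets_tr P Q : meets P Q -> meets (tr P) (tr Q).
Proof. by move=> [o [x [y [h1 h2]]]]; exists (~~ o), y, x; rewrite !mem_tr negbK. Qed.
Lemma common_tr P1 P2 P3 : common (tr P1) (tr P2) (tr P3) -> common P1 P2 P3.
Proof. by move=> [o [x [y []]]]; rewrite !mem_tr => *; exists (~~ o), y, x. Qed.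
Definition swm (m : nat) : nat := match m with 0%N => 2%N | 1%N => 3%N | 2%N => 0%N | _ => 1%N end.
Lemma two_tr P cx cy m : two (tr P) cx cy m -> two P cy cx (swm m).
Proof. by case: m => [|[|[|m]]] /=; rewrite /memH /memV /=; tauto. Qed.
Lemma clawp_tr P1 P2 P3 : clawp (tr P1) (tr P2) (tr P3) -> clawp P1 P2 P3.
Proof. by move=> [cx [cy [m [/two_tr h1 [/two_tr h2 /two_tr h3]]]]]; exists cy, cx, (swm m). Qed.
Lemma meets_sym P Q : meets P Q -> meets Q P.
Proof. by move=> [o [x [y [h1 h2]]]]; exists o, x, y. Qed.

Lemma tri P1 P2 P3 : okbp P1 -> okbp P2 -> okbp P3 ->
  meets P1 P2 -> meets P1 P3 -> meets P2 P3 -> common P1 P2 P3 \/ clawp P1 P2 P3.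
Proof.
move=> o1 o2 o3 m12 m13 m23.
have perm213 : common P2 P1 P3 \/ clawp P2 P1 P3 -> common P1 P2 P3 \/ clawp P1 P2 P3.
  case=> [[o [x [y []]]]|[cx [cy [m [? [? ?]]]]]]; [left|right].
    by exists o, x, y. by exists cx, cy, m.
have perm312 : common P3 P1 P2 \/ clawp P3 P1 P2 -> common P1 P2 P3 \/ clawp P1 P2 P3.
  case=> [[o [x [y []]]]|[cx [cy [m [? [? ?]]]]]]; [left|right].
    by exists o, x, y. by exists cx, cy, m.
have trb : forall Q1 Q2 Q3, common (tr Q1) (tr Q2) (tr Q3) \/ clawp (tr Q1) (tr Q2) (tr Q3) ->
   common Q1 Q2 Q3 \/ clawp Q1 Q2 Q3.
  by move=> Q1 Q2 Q3 [/common_tr|/clawp_tr]; tauto.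
move: (m12) (m13) (m23) => [[] [x12 [y12 [h12 h12']]]] [[] [x13 [y13 [h13 h13']]]].
- by move=> _; apply: (G1core o1 o2 o3 h12 h12' h13 h13').
- case=> -[] [x23 [y23 [h23 h23']]].
  + apply: perm213; apply: (G1core o2 o1 o3 h12' h12 h23 h23') m13.
  + apply: perm312; apply: trb.
    apply: (G1core (okbp_tr o3) (okbp_tr o1) (okbp_tr o2) (x12 := y13) (y12 := x13) (x13 := y23) (y13 := x23)) => //.
    exact: meets_tr.
- case=> -[] [x23 [y23 [h23 h23']]].
  + apply: perm312; apply: (G1core o3 o1 o2 h13' h13 h23' h23) m12.
  + apply: perm213; apply: trb.
    apply: (G1core (okbp_tr o2) (okbp_tr o1) (okbp_tr o3) (x12 := y12) (y12 := x12) (x13 := y23) (y13 := x23)) => //.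
    exact: meets_tr.
- move=> _; apply: trb.
  apply: (G1core (okbp_tr o1) (okbp_tr o2) (okbp_tr o3) (x12 := y12) (y12 := x12) (x13 := y13) (y13 := x13)) => //.
  exact: meets_tr.
Qed.

Section Core.
Variables (Pi Pj Pk Q1 Q2 : bp) (x0 y0 : int).
Variables (o1i o1j o2i o2k : bool) (x1i y1i x1j y1j x2i y2i x2k y2k : int).
Hypotheses (oi : okbp Pi) (oj : okbp Pj) (ok : okbp Pk) (oq1 : okbp Q1) (oq2 : okbp Q2).
Hypotheses (ei : memH Pi x0 y0) (ej : memH Pj x0 y0) (ek : memH Pk x0 y0).
Hypotheses (q1i : mem Q1 o1i x1i y1i) (p1i : mem Pi o1i x1i y1i) (r1i : x0 < x1i).
Hypotheses (q1j : mem Q1 o1j x1j y1j) (p1j : mem Pj o1j x1j y1j) (r1j : x0 < x1j).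
Hypotheses (av1 : forall o x y, mem Q1 o x y -> ~ mem Pk o x y).
Hypotheses (q2i : mem Q2 o2i x2i y2i) (p2i : mem Pi o2i x2i y2i) (r2i : x0 < x2i).
Hypotheses (q2k : mem Q2 o2k x2k y2k) (p2k : mem Pk o2k x2k y2k) (r2k : x0 < x2k).
Hypotheses (av2 : forall o x y, mem Q2 o x y -> ~ mem Pj o x y).
Hypotheses (dis : forall o x y, mem Q1 o x y -> ~ mem Q2 o x y).

Lemma G2core_lt : pb Pj < pb Pk -> False.
Proof.
move=> ljk.
move: ei ej ek; rewrite /memH => -[ei1 ei2] [ej1 ej2] [ek1 ek2].
case: o1j q1j p1j => /= [|] hq1j hp1j.
  by apply: (av1 (o := true) hq1j); move: hp1j; rewrite /= /memH; lia.
move: hq1j hp1j; rewrite /memV => hq1j hp1j.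
have [cj1 cj2] := oj ltac:(lia) ltac:(lia).
have kj : pk Pj = pb Pj by case: cj1; lia.
clear cj1.
case: o1i q1i p1i => /= [|] hq1i hp1i.
  move: hq1i hp1i; rewrite /memH => hq1i hp1i.
  have [[cq1|cq1] _] := oq1 ltac:(lia) ltac:(lia).
    by apply: (av1 (o := true) (x := pb Pj) (y := y0)); rewrite /= /memH; lia.
  by apply: (av1 (o := true) (x := pb Pj - 1) (y := y0)); rewrite /= /memH; lia.
move: hq1i hp1i; rewrite /memV => hq1i hp1i.
have [ci1 ci2] := oi ltac:(lia) ltac:(lia).
have ki : pk Pi = pb Pi by case: ci1; lia.
clear ci1.
case: o2i q2i p2i => /= [|] hq2i hp2i.
  by apply: (av2 (o := true) hq2i); move: hp2i; rewrite /= /memH; lia.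
move: hq2i hp2i; rewrite /memV => hq2i hp2i.
case: o2k q2k p2k => /= [|] hq2k hp2k; last first.
  move: hq2k hp2k; rewrite /memV => hq2k hp2k.
  have [ck1 _] := ok ltac:(lia) ltac:(lia).
  by case: ck1; lia.
move: hq2k hp2k; rewrite /memH => hq2k hp2k.
have [hx|hx] : pb Pj <= x2k \/ x2k < pb Pj by lia.
  2: by apply: (av2 (o := true) (x := x2k) (y := y2k)); rewrite /= /memH; lia.
have [cq1 cq2] := oq2 ltac:(lia) ltac:(lia).
have aq2 : pa Q2 = pb Pj by case: cq1; lia.
clear cq1.
case: ci2 => ci2.
- have cq : pc Q2 = y0 by case: cq2; lia.
  have dj : pd Pj = y0.
    case: cj2 => cj2; last by lia.
    by exfalso; apply: (av2 (o := false) (x := pb Pj) (y := y0)); rewrite /= /memV; lia.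
  by apply: (dis (o := false) (x := pb Pj) (y := y0)); rewrite /= /memV; lia.
- have cq : pd Q2 = y0 by case: cq2; lia.
  have dj : pc Pj = y0.
    case: cj2 => cj2; first by lia.
    by exfalso; apply: (av2 (o := false) (x := pb Pj) (y := y0 - 1)); rewrite /= /memV; lia.
  by apply: (dis (o := false) (x := pb Pj) (y := y0 - 1)); rewrite /= /memV; lia.
Qed.
Lemma G2core_eq : pb Pj = pb Pk -> False.
Proof.
move=> ljk.
move: ei ej ek; rewrite /memH => -[ei1 ei2] [ej1 ej2] [ek1 ek2].
case: o1j q1j p1j => /= [|] hq1j hp1j.
  by apply: (av1 (o := true) hq1j); move: hp1j; rewrite /= /memH; lia.
move: hq1j hp1j; rewrite /memV => hq1j hp1j.
have [cj1 cj2] := oj ltac:(lia) ltac:(lia).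
have kj : pk Pj = pb Pj by case: cj1; lia.
clear cj1.
case: o2k q2k p2k => /= [|] hq2k hp2k.
  by apply: (av2 (o := true) hq2k); move: hp2k; rewrite /= /memH; lia.
move: hq2k hp2k; rewrite /memV => hq2k hp2k.
have [ck1 ck2] := ok ltac:(lia) ltac:(lia).
have kk : pk Pk = pb Pk by case: ck1; lia.
clear ck1.
have main : (pc Pj = y0 /\ pd Pk = y0) \/ (pd Pj = y0 /\ pc Pk = y0).
  case: cj2 => cj2; case: ck2 => ck2.
  - have [h|h] : pd Pj <= pd Pk \/ pd Pk < pd Pj by lia.
      by exfalso; apply: (av1 (o := false) hq1j); rewrite /= /memV; lia.
    by exfalso; apply: (av2 (o := false) hq2k); rewrite /= /memV; lia.
  - by left; lia.
  - by right; lia.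
  - have [h|h] : pc Pk <= pc Pj \/ pc Pj < pc Pk by lia.
      by exfalso; apply: (av1 (o := false) hq1j); rewrite /= /memV; lia.
    by exfalso; apply: (av2 (o := false) hq2k); rewrite /= /memV; lia.
clear cj2 ck2.
case: o1i q1i p1i => /= [|] hq1i hp1i.
  move: hq1i hp1i; rewrite /memH => hq1i hp1i.
  have [hx|hx] : pb Pj <= x1i \/ x1i < pb Pj by lia.
    2: by apply: (av1 (o := true) (x := x1i) (y := y1i)); rewrite /= /memH; lia.
  have [[cq1|cq1] _] := oq1 ltac:(lia) ltac:(lia); last by lia.
  case: o2i q2i p2i => /= [|] hq2i hp2i.
    move: hq2i hp2i; rewrite /memH => hq2i hp2i.
    have [hx'|hx'] : pb Pj <= x2i \/ x2i < pb Pj by lia.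
      2: by apply: (av2 (o := true) (x := x2i) (y := y2i)); rewrite /= /memH; lia.
    have [[cq2|cq2] _] := oq2 ltac:(lia) ltac:(lia); last by lia.
    by apply: (dis (o := true) (x := pb Pj) (y := y0)); rewrite /= /memH; lia.
  move: hq2i hp2i; rewrite /memV => hq2i hp2i.
  have [[ci1|ci1] _] := oi ltac:(lia) ltac:(lia); lia.
move: hq1i hp1i; rewrite /memV => hq1i hp1i.
have [ci1 ci2] := oi ltac:(lia) ltac:(lia).
have ki : pk Pi = pb Pi by case: ci1; lia.
clear ci1.
case: o2i q2i p2i => /= [|] hq2i hp2i.
  by apply: (av2 (o := true) hq2i); move: hp2i; rewrite /= /memH; lia.
move: hq2i hp2i; rewrite /memV => hq2i hp2i.
case: main => -[m1 m2]; case: ci2 => ci2.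
- have [h|h] : pd Pj <= y2i \/ y2i < pd Pj by lia.
    2: by apply: (av2 (o := false) hq2i); rewrite /= /memV; lia.
  by apply: (av2 (o := false) (x := pb Pj) (y := y0)); rewrite /= /memV; lia.
- have [h|h] : y1i < pc Pk \/ pc Pk <= y1i by lia.
    2: by apply: (av1 (o := false) hq1i); rewrite /= /memV; lia.
  by apply: (av1 (o := false) (x := pb Pj) (y := y0 - 1)); rewrite /= /memV; lia.
- have [h|h] : pd Pk <= y1i \/ y1i < pd Pk by lia.
    2: by apply: (av1 (o := false) hq1i); rewrite /= /memV; lia.
  by apply: (av1 (o := false) (x := pb Pj) (y := y0)); rewrite /= /memV; lia.
- have [h|h] : y2i < pc Pj \/ pc Pj <= y2i by lia.
    2: by apply: (av2 (o := false) hq2i); rewrite /= /memV; lia.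
  by apply: (av2 (o := false) (x := pb Pj) (y := y0 - 1)); rewrite /= /memV; lia.
Qed.
End Core.

Lemma G2core (Pi Pj Pk Q1 Q2 : bp) (x0 y0 : int) (o1i o1j o2i o2k : bool)
  (x1i y1i x1j y1j x2i y2i x2k y2k : int) :
  okbp Pi -> okbp Pj -> okbp Pk -> okbp Q1 -> okbp Q2 ->
  memH Pi x0 y0 -> memH Pj x0 y0 -> memH Pk x0 y0 ->
  mem Q1 o1i x1i y1i -> mem Pi o1i x1i y1i -> x0 < x1i ->
  mem Q1 o1j x1j y1j -> mem Pj o1j x1j y1j -> x0 < x1j ->
  (forall o x y, mem Q1 o x y -> ~ mem Pk o x y) ->
  mem Q2 o2i x2i y2i -> mem Pi o2i x2i y2i -> x0 < x2i ->
  mem Q2 o2k x2k y2k -> mem Pk o2k x2k y2k -> x0 < x2k ->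
  (forall o x y, mem Q2 o x y -> ~ mem Pj o x y) ->
  (forall o x y, mem Q1 o x y -> ~ mem Q2 o x y) -> False.
Proof.
move=> oi oj ok oq1 oq2 ei ej ek q1i p1i r1i q1j p1j r1j av1 q2i p2i r2i q2k p2k r2k av2 dis.
have [h|h|h] := ltgtP (pb Pj) (pb Pk).
- exact: (G2core_lt oi oj ok oq1 oq2 ei ej ek q1i p1i r1i q1j p1j r1j av1 q2i p2i r2i q2k p2k r2k av2 dis h).
- have dis' : forall o x y, mem Q2 o x y -> ~ mem Q1 o x y by move=> o x y a b; exact: dis b a.
  exact: (G2core_lt oi ok oj oq2 oq1 ei ek ej q2i p2i r2i q2k p2k r2k av2 q1i p1i r1i q1j p1j r1j av1 dis' h).
- exact: (G2core_eq oi oj ok oq1 oq2 ei ej ek q1i p1i r1i q1j p1j r1j av1 q2i p2i r2i q2k p2k r2k av2 dis h).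
Qed.

Definition refl P := BP (ph P) (- pb P) (- pa P) (- pk P) (pc P) (pd P).
Definition rx (o : bool) (x : int) := if o then - x - 1 else - x.
Lemma memR P o x y : mem (refl P) o x y <-> mem P o (rx o x) y.
Proof. by case: o; rewrite /mem /memH /memV /rx /=; split; lia. Qed.
Lemma rxK o x : rx o (rx o x) = x.
Proof. by case: o; rewrite /rx; lia. Qed.
Lemma memR' P o x y : mem (refl P) o (rx o x) y <-> mem P o x y.
Proof. by rewrite memR rxK. Qed.
Lemma okbp_refl P : okbp P -> okbp (refl P).
Proof. rewrite /okbp /= => h h1 h2; have [] := h ltac:(lia) h2; lia. Qed.
Lemma memH_refl P x0 y0 : memH P x0 y0 -> memH (refl P) (- x0 - 1) y0.
Proof. rewrite /memH /=; lia. Qed.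
Lemma avoid_refl Q P : (forall o x y, mem Q o x y -> ~ mem P o x y) ->
  (forall o x y, mem (refl Q) o x y -> ~ mem (refl P) o x y).
Proof. by move=> h o x y; rewrite !memR; apply: h. Qed.
Lemma left_refl Q Pm Pk o x y x0 y0 : memH Pm x0 y0 -> memH Pk x0 y0 ->
  (forall o x y, mem Q o x y -> ~ mem Pk o x y) ->
  mem Q o x y -> mem Pm o x y -> x <= x0 -> - x0 - 1 < rx o x.
Proof.
move=> em ek av q p l; case: o q p => /= q p; rewrite /rx; last by lia.
have [h|h] : x = x0 \/ x < x0 by lia.
  by exfalso; apply: (av true _ _ q); move: p em ek; rewrite /= /memH; lia.
lia.
Qed.

Lemma G2core_left (Pi Pj Pk Q1 Q2 : bp) (x0 y0 : int) (o1i o1j o2i o2k : bool)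
  (x1i y1i x1j y1j x2i y2i x2k y2k : int) :
  okbp Pi -> okbp Pj -> okbp Pk -> okbp Q1 -> okbp Q2 ->
  memH Pi x0 y0 -> memH Pj x0 y0 -> memH Pk x0 y0 ->
  mem Q1 o1i x1i y1i -> mem Pi o1i x1i y1i -> x1i <= x0 ->
  mem Q1 o1j x1j y1j -> mem Pj o1j x1j y1j -> x1j <= x0 ->
  (forall o x y, mem Q1 o x y -> ~ mem Pk o x y) ->
  mem Q2 o2i x2i y2i -> mem Pi o2i x2i y2i -> x2i <= x0 ->
  mem Q2 o2k x2k y2k -> mem Pk o2k x2k y2k -> x2k <= x0 ->
  (forall o x y, mem Q2 o x y -> ~ mem Pj o x y) ->
  (forall o x y, mem Q1 o x y -> ~ mem Q2 o x y) -> False.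
Proof.
move=> oi oj ok oq1 oq2 ei ej ek q1i p1i r1i q1j p1j r1j av1 q2i p2i r2i q2k p2k r2k av2 dis.
apply: (G2core (okbp_refl oi) (okbp_refl oj) (okbp_refl ok) (okbp_refl oq1) (okbp_refl oq2)
   (memH_refl ei) (memH_refl ej) (memH_refl ek)
   (x1i := rx o1i x1i) (x1j := rx o1j x1j) (x2i := rx o2i x2i) (x2k := rx o2k x2k)
   (y1i := y1i) (y1j := y1j) (y2i := y2i) (y2k := y2k) (o1i := o1i) (o1j := o1j) (o2i := o2i) (o2k := o2k)).
all: rewrite ?memR' //.
all: first [ exact: avoid_refl
  | exact: (left_refl ei ek av1 q1i p1i r1i)
  | exact: (left_refl ej ek av1 q1j p1j r1j)
  | exact: (left_refl ei ej av2 q2i p2i r2i)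
  | exact: (left_refl ek ej av2 q2k p2k r2k) ].
Qed.

Definition avoid Q P := forall o x y, mem Q o x y -> ~ mem P o x y.

Lemma same_side Q Pm Pn Pk x0 y0 om xm ym on xn yn : okbp Q ->
  memH Pm x0 y0 -> memH Pn x0 y0 -> memH Pk x0 y0 -> avoid Q Pk ->
  mem Q om xm ym -> mem Pm om xm ym -> mem Q on xn yn -> mem Pn on xn yn ->
  x0 < xm -> x0 < xn.
Proof.
move=> oq em en ek av qm pm qn pn r.
have [//|l] : x0 < xn \/ xn <= x0 by lia.
exfalso.
have ne : ~ memH Q x0 y0 by move=> h; apply: (av true _ _ h); exact: ek.
move: em en ek; rewrite /memH => -[em1 em2] [en1 en2] [ek1 ek2].
case: om qm pm => /= qm pm; case: on qn pn => /= qn pn.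
- by apply: ne; move: qm pm qn pn; rewrite /memH; lia.
- move: qm pm qn pn; rewrite /memH /memV => qm pm qn pn.
  have [[c|c] _] := oq ltac:(lia) ltac:(lia).
    by apply: ne; rewrite /memH; lia.
  lia.
- move: qm pm qn pn; rewrite /memH /memV => qm pm qn pn.
  have [[c|c] _] := oq ltac:(lia) ltac:(lia).
    lia.
  by apply: ne; rewrite /memH; lia.
- move: qm pm qn pn; rewrite /memV; lia.
Qed.

Lemma G2H (P1 P2 P3 Q12 Q23 Q13 : bp) x0 y0 :
  okbp P1 -> okbp P2 -> okbp P3 -> okbp Q12 -> okbp Q23 -> okbp Q13 ->
  memH P1 x0 y0 -> memH P2 x0 y0 -> memH P3 x0 y0 ->
  meets Q12 P1 -> meets Q12 P2 -> avoid Q12 P3 ->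
  meets Q23 P2 -> meets Q23 P3 -> avoid Q23 P1 ->
  meets Q13 P1 -> meets Q13 P3 -> avoid Q13 P2 ->
  avoid Q12 Q23 -> avoid Q12 Q13 -> avoid Q13 Q23 -> False.
Proof.
move=> o1 o2 o3 oa ob oc e1 e2 e3 [a1 [xa1 [ya1 [qa1 pa1]]]] [a2 [xa2 [ya2 [qa2 pa2]]]] ava
  [b2 [xb2 [yb2 [qb2 pb2]]]] [b3 [xb3 [yb3 [qb3 pb3]]]] avb
  [c1 [xc1 [yc1 [qc1 pc1]]]] [c3 [xc3 [yc3 [qc3 pc3]]]] avc dab dac dcb.
have sa : (x0 < xa1 /\ x0 < xa2) \/ (xa1 <= x0 /\ xa2 <= x0).
  have [r|l] : x0 < xa1 \/ xa1 <= x0 by lia.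
    by left; split => //; exact: (same_side oa e1 e2 e3 ava qa1 pa1 qa2 pa2 r).
  right; split => //; have [r|//] : x0 < xa2 \/ xa2 <= x0 by lia.
  by have := same_side oa e2 e1 e3 ava qa2 pa2 qa1 pa1 r; lia.
have sb : (x0 < xb2 /\ x0 < xb3) \/ (xb2 <= x0 /\ xb3 <= x0).
  have [r|l] : x0 < xb2 \/ xb2 <= x0 by lia.
    by left; split => //; exact: (same_side ob e2 e3 e1 avb qb2 pb2 qb3 pb3 r).
  right; split => //; have [r|//] : x0 < xb3 \/ xb3 <= x0 by lia.
  by have := same_side ob e3 e2 e1 avb qb3 pb3 qb2 pb2 r; lia.
have sc : (x0 < xc1 /\ x0 < xc3) \/ (xc1 <= x0 /\ xc3 <= x0).
  have [r|l] : x0 < xc1 \/ xc1 <= x0 by lia.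
    by left; split => //; exact: (same_side oc e1 e3 e2 avc qc1 pc1 qc3 pc3 r).
  right; split => //; have [r|//] : x0 < xc3 \/ xc3 <= x0 by lia.
  by have := same_side oc e3 e1 e2 avc qc3 pc3 qc1 pc1 r; lia.
have dba : avoid Q23 Q12 by move=> o x y h h'; exact: (dab o x y h' h).
case: sa => -[ra1 ra2]; case: sb => -[rb2 rb3]; case: sc => -[rc1 rc3].
- exact: (G2core o1 o2 o3 oa oc e1 e2 e3 qa1 pa1 ra1 qa2 pa2 ra2 ava qc1 pc1 rc1 qc3 pc3 rc3 avc dac).
- exact: (G2core o2 o1 o3 oa ob e2 e1 e3 qa2 pa2 ra2 qa1 pa1 ra1 ava qb2 pb2 rb2 qb3 pb3 rb3 avb dab).
- exact: (G2core o1 o2 o3 oa oc e1 e2 e3 qa1 pa1 ra1 qa2 pa2 ra2 ava qc1 pc1 rc1 qc3 pc3 rc3 avc dac).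
- exact: (G2core_left o3 o1 o2 oc ob e3 e1 e2 qc3 pc3 rc3 qc1 pc1 rc1 avc qb3 pb3 rb3 qb2 pb2 rb2 avb dcb).
- exact: (G2core o3 o1 o2 oc ob e3 e1 e2 qc3 pc3 rc3 qc1 pc1 rc1 avc qb3 pb3 rb3 qb2 pb2 rb2 avb dcb).
- exact: (G2core_left o1 o2 o3 oa oc e1 e2 e3 qa1 pa1 ra1 qa2 pa2 ra2 ava qc1 pc1 rc1 qc3 pc3 rc3 avc dac).
- exact: (G2core_left o2 o1 o3 oa ob e2 e1 e3 qa2 pa2 ra2 qa1 pa1 ra1 ava qb2 pb2 rb2 qb3 pb3 rb3 avb dab).
- exact: (G2core_left o1 o2 o3 oa oc e1 e2 e3 qa1 pa1 ra1 qa2 pa2 ra2 ava qc1 pc1 rc1 qc3 pc3 rc3 avc dac).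
Qed.

Lemma nm_avoid Q P : ~ meets Q P -> avoid Q P.
Proof. by move=> h o x y a b; apply: h; exists o, x, y. Qed.
Lemma nm_avoid_tr Q P : ~ meets Q P -> avoid (tr Q) (tr P).
Proof. by move=> h o x y; rewrite !mem_tr => a b; apply: h; exists (~~ o), y, x. Qed.

Theorem geo (P1 P2 P3 Q12 Q23 Q13 : bp) :
  okbp P1 -> okbp P2 -> okbp P3 -> okbp Q12 -> okbp Q23 -> okbp Q13 ->
  meets P1 P2 -> meets P1 P3 -> meets P2 P3 ->
  meets Q12 P1 -> meets Q12 P2 -> ~ meets Q12 P3 ->
  meets Q23 P2 -> meets Q23 P3 -> ~ meets Q23 P1 ->
  meets Q13 P1 -> meets Q13 P3 -> ~ meets Q13 P2 ->
  ~ meets Q12 Q23 -> ~ meets Q12 Q13 -> ~ meets Q13 Q23 -> clawp P1 P2 P3.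
Proof.
move=> o1 o2 o3 oa ob oc m12 m13 m23 a1 a2 a3 b2 b3 b1 c1 c3 c2 dab dac dcb.
case: (tri o1 o2 o3 m12 m13 m23) => // -[[] [x [y [h1 h2 h3]]]]; exfalso.
- exact: (G2H o1 o2 o3 oa ob oc h1 h2 h3 a1 a2 (nm_avoid a3) b2 b3 (nm_avoid b1)
     c1 c3 (nm_avoid c2) (nm_avoid dab) (nm_avoid dac) (nm_avoid dcb)).
- exact: (G2H (okbp_tr o1) (okbp_tr o2) (okbp_tr o3) (okbp_tr oa) (okbp_tr ob) (okbp_tr oc)
     (x0 := y) (y0 := x) h1 h2 h3 (meets_tr a1) (meets_tr a2) (nm_avoid_tr a3)
     (meets_tr b2) (meets_tr b3) (nm_avoid_tr b1)
     (meets_tr c1) (meets_tr c3) (nm_avoid_tr c2) (nm_avoid_tr dab) (nm_avoid_tr dac) (nm_avoid_tr dcb)).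
Qed.

Inductive dir := DR | DL | DU | DD.
Definition dx d : int := match d with DR => 1 | DL => -1 | _ => 0 end.
Definition dy d : int := match d with DU => 1 | DD => -1 | _ => 0 end.
Definition step (p : point) d : point := (p.1 + dx d, p.2 + dy d).
Definition horiz d := match d with DR | DL => true | _ => false end.

Definition vlo d2 (c m2 : int) := if d2 is DD then c - m2 else c.
Definition vhi d2 (c m2 : int) := if d2 is DD then c else c + m2.
Definition hlo d2 (c m2 : int) := if d2 is DL then c - m2 else c.
Definition hhi d2 (c m2 : int) := if d2 is DL then c else c + m2.

Definition bp_of (p : point) d1 (m1 : int) d2 (m2 : int) : bp :=
  match d1 with
  | DR => BP p.2 p.1 (p.1 + m1) (p.1 + m1) (vlo d2 p.2 m2) (vhi d2 p.2 m2)
  | DL => BP p.2 (p.1 - m1) p.1 (p.1 - m1) (vlo d2 p.2 m2) (vhi d2 p.2 m2)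
  | DU => BP (p.2 + m1) (hlo d2 p.1 m2) (hhi d2 p.1 m2) p.1 p.2 (p.2 + m1)
  | DD => BP (p.2 - m1) (hlo d2 p.1 m2) (hhi d2 p.1 m2) p.1 (p.2 - m1) p.2
  end.

Lemma okbp_of p d1 m1 d2 m2 : okbp (bp_of p d1 m1 d2 m2).
Proof. by case: d1; case: d2; rewrite /okbp /= => *; lia. Qed.

Definition ecode (o : bool) (x y : int) (a b : point) : Prop :=
  if o then a.2 = y /\ b.2 = y /\ ((a.1 = x /\ b.1 = x + 1) \/ (b.1 = x /\ a.1 = x + 1))
  else a.1 = x /\ b.1 = x /\ ((a.2 = y /\ b.2 = y + 1) \/ (b.2 = y /\ a.2 = y + 1)).
Definition edgeQ P (a b : point) := exists o x y, ecode o x y a b /\ mem P o x y.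
Definition cx (p : point) d := if d is DL then p.1 - 1 else p.1.
Definition cy (p : point) d := if d is DD then p.2 - 1 else p.2.

Definition PE (a b p0 p1 : point) : Prop :=
  (a.1 = p0.1 /\ a.2 = p0.2 /\ b.1 = p1.1 /\ b.2 = p1.2) \/
  (b.1 = p0.1 /\ b.2 = p0.2 /\ a.1 = p1.1 /\ a.2 = p1.2).

Lemma pair_eqP (a b p0 p1 : point) :
  ((a, b) == (p0, p1)) = [&& a.1 == p0.1, a.2 == p0.2, b.1 == p1.1 & b.2 == p1.2].
Proof.
case: a => ??; case: b => ??; case: p0 => ??; case: p1 => ??.
by rewrite /= !xpair_eqE /= !andbA.
Qed.

Lemma uses_cons2 p0 p1 t a b :
  uses_edge [:: p0, p1 & t] a b <-> PE a b p0 p1 \/ uses_edge (p1 :: t) a b.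
Proof.
rewrite /uses_edge /= !in_cons !pair_eqP /PE.
split.
- case/orP => [/orP [h|h] | /orP [h|h]].
  + left; left; move/and4P: h => [/eqP ? /eqP ? /eqP ? /eqP ?]; tauto.
  + by right; rewrite h.
  + left; right; move/and4P: h => [/eqP ? /eqP ? /eqP ? /eqP ?]; tauto.
  + by right; rewrite h orbT.
- case=> [[h|h]|/orP [h|h]].
  + apply/orP; left; apply/orP; left; apply/and4P; split; apply/eqP; tauto.
  + apply/orP; right; apply/orP; left; apply/and4P; split; apply/eqP; tauto.
  + by rewrite h orbT.
  + by rewrite h !orbT.
Qed.

Lemma uses_two p0 p1 a b : uses_edge [:: p0; p1] a b <-> PE a b p0 p1.
Proof.
rewrite /uses_edge /= !in_cons !pair_eqP /PE !in_nil !orbF.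
split.
- case/orP => h; move/and4P: h => [/eqP ? /eqP ? /eqP ? /eqP ?]; tauto.
- case=> h; apply/orP; [left|right]; apply/and4P; split; apply/eqP; tauto.
Qed.

Lemma ext_same p d1 (m1 : int) d2 (m2 : int) (o : bool) (x y : int) : 0 <= m1 ->
  mem (bp_of p d1 (m1 + 1) d2 m2) o x y <->
  (o = horiz d1 /\ x = cx p d1 /\ y = cy p d1) \/ mem (bp_of (step p d1) d1 m1 d2 m2) o x y.
Proof.
case: p => px py => h.
by case: o; case: d1; case: d2; rewrite /mem /memH /memV /step /vlo /vhi /hlo /hhi /cx /cy /=; split; lia.
Qed.

Lemma ext_bend p d d1 (m1 : int) d2 (o : bool) (x y : int) : 0 <= m1 -> horiz d != horiz d1 ->
  mem (bp_of p d 1 d1 m1) o x y <->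
  (o = horiz d /\ x = cx p d /\ y = cy p d) \/ mem (bp_of (step p d) d1 m1 d2 0) o x y.
Proof.
case: p => px py => h.
by case: o; case: d; case: d1 => //= _; case: d2; rewrite /mem /memH /memV /step /vlo /vhi /hlo /hhi /cx /cy /=; split; lia.
Qed.

Lemma PE_code a b p d : PE a b p (step p d) <-> ecode (horiz d) (cx p d) (cy p d) a b.
Proof.
case: p => px py; case: a => ax ay; case: b => bx b_y.
by case: d; rewrite /PE /ecode /step /cx /cy /=; split; lia.
Qed.

Lemma edgeQ_ext P P' p d (E : forall o x y, mem P o x y <->
  (o = horiz d /\ x = cx p d /\ y = cy p d) \/ mem P' o x y) a b :
  edgeQ P a b <-> PE a b p (step p d) \/ edgeQ P' a b.
Proof.
rewrite PE_code; split.
  move=> [o [x [y [c /E [[eo [ex ey]]|m]]]]].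
    by left; rewrite -eo -ex -ey.
  by right; exists o, x, y.
case=> [c|[o [x [y [c m]]]]].
  by exists (horiz d), (cx p d), (cy p d); split => //; apply/E; left.
by exists o, x, y; split => //; apply/E; right.
Qed.

Lemma adj_step p q : grid_adj p q -> exists d, q = step p d.
Proof.
case: p => px py; case: q => qx qy; rewrite /grid_adj /= => /eqP h.
have : (qx = px + 1 /\ qy = py) \/ (qx = px - 1 /\ qy = py) \/
       (qy = py + 1 /\ qx = px) \/ (qy = py - 1 /\ qx = px) by lia.
by case => [[-> ->]|[[-> ->]|[[-> ->]|[-> ->]]]];
  [exists DR|exists DL|exists DU|exists DD]; rewrite /step /= ?addr0.
Qed.

Lemma dir_same d d1 : horiz d = horiz d1 -> d = d1 \/ forall p, step (step p d) d1 = p.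
Proof.
case: d; case: d1 => //= _; try by left.
all: by right => -[x y]; rewrite /step /= ?addr0 ?addrK ?addrNK.
Qed.

Lemma horiz_step p d : horizontal p (step p d) = horiz d.
Proof.
case: p => px py; rewrite /horizontal /step.
by case: d; rewrite /= ?addr0 ?eqxx //; apply/negbTE/eqP; lia.
Qed.

Lemma bends_cons3 p p1 p2 t :
  bends [:: p, p1, p2 & t] = ((horizontal p p1 != horizontal p1 p2) + bends [:: p1, p2 & t])%N.
Proof. by []. Qed.

Lemma empty_bp p d d2 o x y : ~ mem (bp_of p d 0 d2 0) o x y.
Proof. by case: p => px py; case: o; case: d; case: d2; rewrite /mem /memH /memV /vlo /vhi /hlo /hhi /=; lia. Qed.

Lemma shape_ind (t : seq point) (p : point) :
  uniq (p :: t) -> all (fun pq => grid_adj pq.1 pq.2) (zip (p :: t) t) -> (0 < size t)%N ->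
  (bends (p :: t) <= 1)%N ->
  exists d1 d2 (m1 m2 : int), 0 < m1 /\ 0 <= m2 /\ horiz d1 != horiz d2 /\ head p t = step p d1 /\
     (bends (p :: t) = (m2 != 0) :> nat) /\
     forall a b, uses_edge (p :: t) a b <-> edgeQ (bp_of p d1 m1 d2 m2) a b.
Proof.
elim: t p => [|p1 t IH] p // U A _ B.
have /adj_step [d hd] : grid_adj p p1 by move: A => /= /andP [].
case: t IH U A B => [|p2 t] IH U A B.
  pose d2 := if horiz d then DU else DR.
  exists d, d2, (0 + 1), 0.
  split; first by lia.
  split; first by lia.
  split; first by rewrite /d2; case: (horiz d).
  split; first by rewrite hd.
  split; first by [].
  move=> a b; rewrite uses_two hd.
  rewrite (edgeQ_ext (P' := bp_of (step p d) d 0 d2 0)); last first.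
    by move=> o x y; apply: ext_same.
  split; first by left.
  by case=> // -[o [x [y [_ /empty_bp]]]].
have U' : uniq [:: p1, p2 & t] by move: U => /= /andP [].
have A' : all (fun pq => grid_adj pq.1 pq.2) (zip [:: p1, p2 & t] [:: p2 & t]).
  by move: A => /= /andP [].
have B' : (bends [:: p1, p2 & t] <= 1)%N.
  by move: B; rewrite bends_cons3; apply: leq_trans; apply: leq_addl.
have [d1 [d2 [m1 [m2 [h1 [h2 [h3 [/= h4 [h5 h6]]]]]]]]] := IH p1 U' A' isT B'.
have hh1 : horizontal p p1 = horiz d by rewrite hd horiz_step.
have hh2 : horizontal p1 p2 = horiz d1 by rewrite h4 horiz_step.
case: (boolP (horiz d == horiz d1)) => hdd.
  have [ed|opp] := dir_same (eqP hdd).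
    subst d; exists d1, d2, (m1 + 1), m2.
    split; first by lia.
    split; first by [].
    split; first by [].
    split; first by rewrite hd.
    split; first by rewrite bends_cons3 hh1 hh2 eqxx add0n h5.
    move=> a b; rewrite uses_cons2 h6 hd.
    symmetry; apply: edgeQ_ext => o x y; apply: ext_same; lia.
  by move: U; rewrite h4 hd opp /= !inE eqxx orbT.
have m20 : m2 = 0.
  move: B; rewrite bends_cons3 hh1 hh2 hdd h5.
  by case: (m2 =P 0).
exists d, d1, 1, m1.
split; first by [].
split; first by lia.
split; first by [].
split; first by rewrite hd.
split; first by rewrite bends_cons3 hh1 hh2 hdd h5 m20 eqxx /=; case: (m1 =P 0) => //; lia.
move=> a b; rewrite uses_cons2 h6 m20 hd.
symmetry; apply: (edgeQ_ext (p := p) (d := d)) => o x y.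
exact: (ext_bend p d2 o x y (ltW h1) hdd).
Qed.

Lemma rep_bp s : grid_path s -> (bends s <= 1)%N ->
  exists P, okbp P /\ forall a b, uses_edge s a b <-> edgeQ P a b.
Proof.
case: s => [|p t] /and3P [sz U A] B //.
have [d1 [d2 [m1 [m2 [_ [_ [_ [_ [_ h6]]]]]]]]] := shape_ind U A sz B.
by exists (bp_of p d1 m1 d2 m2); split => //; exact: okbp_of.
Qed.

Lemma ecode_uniq o x y o' x' y' a b : ecode o x y a b -> ecode o' x' y' a b ->
  o = o' /\ x = x' /\ y = y'.
Proof. by case: o; case: o'; rewrite /ecode => h h'; split => //; lia. Qed.

Lemma meets_edgeQ P Q : meets P Q <-> exists a b, edgeQ P a b /\ edgeQ Q a b.
Proof.
split.
  move=> [o [x [y [mp mq]]]].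
  exists (x, y), (if o then (x + 1, y) else (x, y + 1)).
  have c : ecode o x y (x, y) (if o then (x + 1, y) else (x, y + 1)).
    by case: o {mp mq}; rewrite /ecode /=; lia.
  by split; exists o, x, y.
move=> [a [b [[o [x [y [c m]]]] [o' [x' [y' [c' m']]]]]]].
have [e1 [e2 e3]] := ecode_uniq c c'; subst o' x' y'.
by exists o, x, y.
Qed.

Definition mpt (cx cy : int) (m : nat) : point :=
  match m with 0%N => (cx + 1, cy) | 1%N => (cx - 1, cy) | 2%N => (cx, cy + 1) | _ => (cx, cy - 1) end.

Lemma two_claw P s cx cy m : (forall a b, uses_edge s a b <-> edgeQ P a b) ->
  two P cx cy m -> uses_two_claw_edges (cx, cy) (mpt cx cy m) s.
Proof.
move=> E.
have uR : memH P cx cy -> uses_edge s (cx, cy) (cx + 1, cy).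
  by move=> h; apply/E; exists true, cx, cy; split => //; rewrite /ecode /=; lia.
have uL : memH P (cx - 1) cy -> uses_edge s (cx, cy) (cx - 1, cy).
  by move=> h; apply/E; exists true, (cx - 1), cy; split => //; rewrite /ecode /=; lia.
have uU : memV P cx cy -> uses_edge s (cx, cy) (cx, cy + 1).
  by move=> h; apply/E; exists false, cx, cy; split => //; rewrite /ecode /=; lia.
have uD : memV P cx (cy - 1) -> uses_edge s (cx, cy) (cx, cy - 1).
  by move=> h; apply/E; exists false, cx, (cy - 1); split => //; rewrite /ecode /=; lia.
rewrite /uses_two_claw_edges.
case: m => [|[|[|m]]] /=.
- case=> [[h1 h2]|[[h1 h2]|[h1 h2]]];
   [exists (cx - 1, cy), (cx, cy + 1) | exists (cx - 1, cy), (cx, cy - 1) | exists (cx, cy + 1), (cx, cy - 1)];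
   repeat (apply/andP; split);
   first [ by apply: uR | by apply: uL | by apply: uU | by apply: uD | (rewrite /grid_adj /=; lia) | (rewrite xpair_eqE /=; lia) ].
- case=> [[h1 h2]|[[h1 h2]|[h1 h2]]];
   [exists (cx + 1, cy), (cx, cy + 1) | exists (cx + 1, cy), (cx, cy - 1) | exists (cx, cy + 1), (cx, cy - 1)];
   repeat (apply/andP; split);
   first [ by apply: uR | by apply: uL | by apply: uU | by apply: uD | (rewrite /grid_adj /=; lia) | (rewrite xpair_eqE /=; lia) ].
- case=> [[h1 h2]|[[h1 h2]|[h1 h2]]];
   [exists (cx + 1, cy), (cx - 1, cy) | exists (cx + 1, cy), (cx, cy - 1) | exists (cx - 1, cy), (cx, cy - 1)];
   repeat (apply/andP; split);
   first [ by apply: uR | by apply: uL | by apply: uU | by apply: uD | (rewrite /grid_adj /=; lia) | (rewrite xpair_eqE /=; lia) ].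
- case=> [[h1 h2]|[[h1 h2]|[h1 h2]]];
   [exists (cx + 1, cy), (cx - 1, cy) | exists (cx + 1, cy), (cx, cy + 1) | exists (cx - 1, cy), (cx, cy + 1)];
   repeat (apply/andP; split);
   first [ by apply: uR | by apply: uL | by apply: uU | by apply: uD | (rewrite /grid_adj /=; lia) | (rewrite xpair_eqE /=; lia) ].
Qed.

Lemma mpt_adj cx cy m : grid_adj (cx, cy) (mpt cx cy m).
Proof. by case: m => [|[|[|m]]]; rewrite /grid_adj /=; lia. Qed.

Local Close Scope ring_scope.

Theorem corollary4p11 (T : finType) (e : rel T) :
  simple_graph e -> maximal_outerplanar e ->
  forall rep : T -> seq point, B1_EPG_rep e rep ->
  forall u v w : T, reduced_triangle e u v w ->
  claw_clique3 (rep u) (rep v) (rep w).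
Proof.
move=> sg mop rep [Hr Ha] u v w tri.
have [y1 [y2 [y3 [[euv [evw [euw [uv [vw uw]]]]] [a1 [b1 [c1 d1]]] [a2 [b2 [c2 d2]]]
  [a3 [b3 [c3 d3]]] [i12 [i13 i23]]]]]] := graph_part sg mop tri.
have [se ie] := sg.
have ne : forall a b, e a b -> a != b.
  by move=> a b h; apply/eqP => ab; move: h; rewrite ab ie.
have y12 : y1 != y2 by apply/eqP => h; move: c1; rewrite h b2.
have y13 : y1 != y3 by apply/eqP => h; move: c1; rewrite h b3.
have y32 : y3 != y2 by apply/eqP => h; move: c2; rewrite -h a3.
have i32 : ~~ e y3 y2 by rewrite se.
have getP : forall x, exists P, okbp P /\ forall a b, uses_edge (rep x) a b <-> edgeQ P a b.
  by move=> x; have [g b] := Hr x; exact: rep_bp g b.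
have adj : forall x y Px Py, (forall a b, uses_edge (rep x) a b <-> edgeQ Px a b) ->
    (forall a b, uses_edge (rep y) a b <-> edgeQ Py a b) -> x != y -> (e x y <-> meets Px Py).
  move=> x y Px Py Ex Ey xy; rewrite (Ha x y xy) meets_edgeQ; split.
    by move=> [p [q /andP [h1 h2]]]; exists p, q; split; [apply/Ex|apply/Ey].
  by move=> [p [q [h1 h2]]]; exists p, q; apply/andP; split; [apply/Ex|apply/Ey].
have [Pu [ou Eu]] := getP u.
have [Pv [ov Ev]] := getP v.
have [Pw [ow Ew]] := getP w.
have [Q1 [o1 E1]] := getP y1.
have [Q2 [o2 E2]] := getP y2.
have [Q3 [o3 E3]] := getP y3.
have pos : forall x y Px Py (Ex : forall a b, uses_edge (rep x) a b <-> edgeQ Px a b)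
    (Ey : forall a b, uses_edge (rep y) a b <-> edgeQ Py a b), e x y -> meets Px Py.
  by move=> x y Px Py Ex Ey h; apply/(adj x y Px Py Ex Ey (ne _ _ h)).
have neg : forall x y Px Py (Ex : forall a b, uses_edge (rep x) a b <-> edgeQ Px a b)
    (Ey : forall a b, uses_edge (rep y) a b <-> edgeQ Py a b), x != y -> ~~ e x y -> ~ meets Px Py.
  by move=> x y Px Py Ex Ey xy h m; move/negP: h; apply; apply/(adj x y Px Py Ex Ey xy).
have := geo ou ov ow o1 o2 o3 (pos _ _ _ _ Eu Ev euv) (pos _ _ _ _ Eu Ew euw) (pos _ _ _ _ Ev Ew evw)
  (pos _ _ _ _ E1 Eu a1) (pos _ _ _ _ E1 Ev b1) (neg _ _ _ _ E1 Ew d1 c1)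
  (pos _ _ _ _ E2 Ev a2) (pos _ _ _ _ E2 Ew b2) (neg _ _ _ _ E2 Eu d2 c2)
  (pos _ _ _ _ E3 Eu a3) (pos _ _ _ _ E3 Ew b3) (neg _ _ _ _ E3 Ev d3 c3)
  (neg _ _ _ _ E1 E2 y12 i12) (neg _ _ _ _ E1 E3 y13 i13) (neg _ _ _ _ E3 E2 y32 i32).
move=> [cx [cy [m [h1 [h2 h3]]]]].
exists (cx, cy), (mpt cx cy m); split.
  exact: mpt_adj.
by split; apply: two_claw.
Qed.
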